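(* Let $k\ge 2$ be an integer, let $x>0$ be real, and let $M_0\ge 6$ be an integer. Let $M=M(x,k)$ be the nonnegative integer satisfying $$2^k+3^k+\cdots+p_M^k\le x<2^k+3^k+\cdots+p_M^k+p_{M+1}^k .$$ If $M\ge M_0$, then $$\log M<\frac{\log x}{k+1}\cdot\frac{1}{A(M_0)}\qquad\text{and}\qquad \log M\ge \frac{\log x}{k+1}\cdot\frac{1}{B(M_0,k)}.$$
   Context: $p_n$ denotes the $n$th prime, with $p_1=2$. For $y\ge 6$ define $A(y)=\frac{\log(y/2)}{\log y}$ and $B(y,k)=\frac{\log(y+1)}{\log y}+\frac{\log\log\left((y+1)^2\right)}{\log y}\cdot\frac{k}{k+1}$. *)

(* Defs.v *)
From mathcomp Require Import ssreflect ssrfun ssrbool eqtype ssrnat prime.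
From Stdlib Require Import Reals.

Definition next_prime (m : nat) : nat :=
  ex_minn (let: exist2 q H1 H2 := prime_above m in
           ex_intro (fun q => (m < q) && prime q) q (introT andP (conj H1 H2))).

(* 0-indexed primes: prime0 0 = 2, prime0 1 = 3, ... *)
Fixpoint prime0 (n : nat) : nat :=
  match n with
  | 0 => 2
  | S n' => next_prime (prime0 n')
  end.

(* p n = p_n, the n-th prime with p_1 = 2 (p 0 is a junk value, never used) *)
Definition p (n : nat) : nat := prime0 n.-1.

Open Scope R_scope.

Fixpoint psum (k M : nat) : R :=
  match M with
  | O => 0
  | S M' => psum k M' + (INR (p (S M'))) ^ k
  end.

Definition A (y : R) : R := ln (y / 2) / ln y.

Definition B (y : R) (k : nat) : R :=
  ln (y + 1) / ln y
  + ln (ln ((y + 1) ^ 2)) / ln y * (INR k / (INR k + 1)).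

(* Main.v *)
Require Import Defs.
From Stdlib Require Import Reals.
From Stdlib Require Import Lra Psatz ZArith NArith.
From mathcomp Require Import ssreflect ssrfun ssrbool eqtype ssrnat seq path div prime bigop binomial.
From mathcomp Require Import zify.

Open Scope nat_scope.

Lemma next_prime_spec m :
  [/\ m < next_prime m, prime (next_prime m) &
      forall q, m < q -> prime q -> next_prime m <= q].
Proof.
  rewrite /next_prime. case: ex_minnP => q /andP [H1 H2] H3.
  split => // r Hr Pr. apply: H3. by rewrite Hr Pr.
Qed.

Lemma prime0_prime n : prime (prime0 n).
Proof. case: n => [|n] //=. by case: (next_prime_spec (prime0 n)). Qed.

Lemma prime0_lt n : prime0 n < prime0 n.+1.
Proof. rewrite /=. by case: (next_prime_spec (prime0 n)). Qed.

Lemma prime0_ge n : n.+2 <= prime0 n.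
Proof.
  elim: n => [|n IH] //. apply: leq_trans (prime0_lt n). by [].
Qed.

Lemma prime0_mono i j : i <= j -> prime0 i <= prime0 j.
Proof.
  move=> /subnK <-. elim: (j - i) => [|d IH] //.
  rewrite addSn. apply: leq_trans IH _. exact: ltnW (prime0_lt _).
Qed.

Lemma prime0_le_nth s : sorted ltn s -> all prime s ->
  forall i, i < size s -> prime0 i <= nth 0 s i.
Proof.
  move=> Hs Hp. elim => [|i IH] Hi.
  - rewrite /=. have: prime (nth 0 s 0) by apply: (all_nthP 0 Hp); lia.
    by move/prime_gt1.
  - have Hlt : nth 0 s i < nth 0 s i.+1.
    { apply: (@sorted_ltn_nth _ ltn ltn_trans 0 s Hs i i.+1); rewrite ?inE; lia. }
    rewrite /=. case: (next_prime_spec (prime0 i)) => _ _ H. apply: H.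
    + apply: leq_ltn_trans (IH _) Hlt. lia.
    + by apply: (all_nthP 0 Hp).
Qed.

Lemma bin_step m : 'C((m.+1).*2, m.+1) * m.+1 = 2 * (m.*2.+1) * 'C(m.*2, m).
Proof.
  have H1 := mul_bin_diag (m.+1).*2 m.
  have H2 := mul_bin_diag (m.*2.+1) m.
  have H3 : 'C(m.*2.+1, m.+1) = 'C(m.*2.+1, m).
  { rewrite -(bin_sub (n:=m.*2.+1) (m:=m)); last lia. f_equal. lia. }
  rewrite doubleS /= in H1. rewrite /= in H2. rewrite H3 in H2.
  rewrite doubleS.
  apply/eqP. rewrite -(eqn_pmul2r (ltn0Sn m)). apply/eqP.
  set X := 'C(m.*2.+1, m) in H1 H2. set Y := 'C(m.*2.+2, m.+1) in H1 *.
  set Z := 'C(m.*2, m) in H2 *.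
  have E : Y * m.+1 * m.+1 = m.*2.+2 * (m.+1 * X) by nia.
  rewrite E -H2. nia.
Qed.

Lemma bin_lower m : 4 ^ m <= (m.*2).+1 * 'C(m.*2, m).
Proof.
  elim: m => [|m IH] //.
  have H := bin_step m.
  rewrite expnS.
  have Hpos : 0 < m.+1 by [].
  rewrite -(leq_pmul2r Hpos).
  have -> : (m.+1).*2.+1 * 'C((m.+1).*2, m.+1) * m.+1
          = (m.+1).*2.+1 * ('C((m.+1).*2, m.+1) * m.+1) by rewrite mulnA.
  rewrite H. move: IH. set P := 4 ^ m. set C := 'C(m.*2, m). move=> IH.
  have : ((m.+1).*2.+1 * 2) * P <= ((m.+1).*2.+1 * 2) * ((m.*2).+1 * C) by rewrite leq_mul2l IH orbT.
  have -> : (m.+1).*2.+1 * (2 * m.*2.+1 * C) = ((m.+1).*2.+1 * 2) * ((m.*2).+1 * C) by rewrite !mulnA.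
  lia.
Qed.

Lemma div_double_le m q : 0 < q -> m.*2 %/ q <= (m %/ q).*2 + 1.
Proof.
  move=> Hq. rewrite {1}(divn_eq m q).
  have -> : (m %/ q * q + m %% q).*2 = ((m %/ q).*2) * q + (m %% q).*2 by rewrite -!muln2; nia.
  rewrite divnMDl //. rewrite leq_add2l.
  have : (m %% q).*2 %/ q < 2 by rewrite ltn_divLR // -!muln2; have := ltn_pmod m Hq; lia.
  lia.
Qed.

Lemma sum_le_T T n : \sum_(1 <= k < n.+1) (k <= T) <= minn n T.
Proof.
  elim: n => [|n IH]; first by rewrite big_geq.
  rewrite big_nat_recr //=. case: (leqP n.+1 T) => H.
  - rewrite addn1 ltnS. apply: leq_trans IH _. lia.
  - rewrite addn0. apply: leq_trans IH _. lia.
Qed.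

Lemma logn_fact_ext p m : prime p ->
  logn p m`! = \sum_(1 <= k < (m.*2).+1) m %/ p ^ k.
Proof.
  move=> Pp. rewrite logn_fact //.
  rewrite [RHS](big_cat_nat (n:=m.+1)) //=; last lia.
  have -> : \sum_(m.+1 <= k < (m.*2).+1) m %/ p ^ k = 0.
  { rewrite big_nat_cond big1 // => k /andP [/andP [Hk _] _].
    apply: divn_small. apply: leq_trans Hk _. apply: ltnW. apply: ltn_expl. exact: prime_gt1. }
  by rewrite addn0.
Qed.

Lemma logn_bin_le p m : prime p -> 0 < m -> logn p 'C(m.*2, m) <= trunc_log p m.*2.
Proof.
  move=> Pp Hm.
  have Hf := bin_fact (n:=m.*2) (m:=m) (ltac:(lia) : m <= m.*2) .
  have E2 : m.*2 - m = m by lia. rewrite E2 in Hf.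
  have HC : 0 < 'C(m.*2, m) by rewrite bin_gt0; lia.
  have E : logn p (m.*2)`! = logn p 'C(m.*2, m) + (logn p m`! + logn p m`!).
  { rewrite -Hf lognM // ?lognM // ?muln_gt0 ?fact_gt0 //. }
  move: E. rewrite (logn_fact_ext p m Pp) (logn_fact (m.*2) Pp).
  set T := trunc_log p m.*2.
  have Hle : \sum_(1 <= k < (m.*2).+1) m.*2 %/ p ^ k <=
             \sum_(1 <= k < (m.*2).+1) (m %/ p ^ k + m %/ p ^ k + (k <= T)).
  { apply: leq_sum => k _. case: (leqP k T) => HkT.
    - have Hq : 0 < p ^ k by rewrite expn_gt0 (prime_gt0 Pp).
      have := div_double_le m (p ^ k) Hq. lia.
    - have H2 : m.*2 < p ^ k.
      { have H3 := trunc_log_ltn m.*2 (prime_gt1 Pp).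
        apply: (leq_trans H3). rewrite leq_pexp2l ?prime_gt1 //. exact: prime_gt0. }
      by rewrite (divn_small H2). }
  rewrite !big_split /= in Hle. have := sum_le_T T m.*2. lia.
Qed.

Lemma prod_le_pow (s : seq nat) (f : nat -> nat) c :
  (forall x, x \in s -> f x <= c) -> \prod_(x <- s) f x <= c ^ size s.
Proof.
  elim: s => [|a s IH] H; first by rewrite big_nil.
  rewrite big_cons /= expnS. apply: leq_mul.
  - apply: H. by rewrite inE eqxx.
  - apply: IH => x Hx. apply: H. by rewrite inE Hx orbT.
Qed.

Lemma pfactor_bin_le p m : prime p -> 0 < m -> p ^ logn p 'C(m.*2, m) <= m.*2.
Proof.
  move=> Pp Hm. apply: leq_trans (trunc_logP (prime_gt1 Pp) _); last lia.
  rewrite leq_pexp2l ?prime_gt0 //. exact: logn_bin_le.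
Qed.

Lemma bin_le_pow m : 0 < m -> 'C(m.*2, m) <= (m.*2) ^ count prime (iota 0 (m.*2).+1).
Proof.
  move=> Hm.
  have HC : 0 < 'C(m.*2, m) by rewrite bin_gt0; lia.
  rewrite {1}(prod_prime_decomp HC) prime_decompE big_map /=.
  apply: leq_trans (prod_le_pow _ _ (m.*2) _) _.
  - move=> q. rewrite mem_primes => /and3P [Pq _ _]. exact: pfactor_bin_le.
  - apply: leq_pexp2l; first lia.
    rewrite -size_filter. apply: uniq_leq_size; first exact: primes_uniq.
    move=> q Hq. have := Hq. rewrite mem_primes => /and3P [Pq _ _].
    rewrite mem_filter Pq mem_iota /= ltnS.
    have H1 := pfactor_bin_le q m Pq Hm.
    have H2 : 0 < logn q 'C(m.*2, m) by rewrite logn_gt0.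
    rewrite prime_gt0 //=. apply: leq_trans H1. rewrite -{1}(expn1 q). apply: leq_pexp2l => //. exact: prime_gt0.
Qed.

Fixpoint trial (q d : N) (fuel : nat) : bool :=
  match fuel with
  | O => false
  | S f => if N.ltb q (N.mul d d) then true
           else if N.eqb (N.modulo q d) N0 then false
           else trial q (N.succ d) f
  end.

Definition isprimeN (q : N) : bool := N.leb 2 q && trial q 2 200.

Fixpoint chk (l : list N) (prev n0 : N) : bool :=
  match l with
  | nil => N.leb 2048 n0
  | x :: t => N.ltb prev x && isprimeN x &&
              (if N.leb 7 n0 && N.leb n0 2047 then N.leb (N.mul 3 x) (N.mul (N.mul 4 n0) (N.log2 n0)) else true) &&
              chk t x (N.succ n0)
  end.

Section PL.
Local Open Scope N_scope.
Definition plistN : list N := 2 :: 3 :: 5 :: 7 :: 11 :: 13 :: 17 :: 19 :: 23 :: 29 :: 31 :: 37 :: 41 :: 43 :: 47 :: 53 :: 59 :: 61 :: 67 :: 71 :: 73 :: 79 :: 83 :: 89 :: 97 :: 101 :: 103 :: 107 :: 109 :: 113 :: 127 :: 131 :: 137 :: 139 :: 149 :: 151 :: 157 :: 163 :: 167 :: 173 :: 179 :: 181 :: 191 :: 193 :: 197 :: 199 :: 211 :: 223 :: 227 :: 229 :: 233 :: 239 :: 241 :: 251 :: 257 :: 263 :: 269 :: 271 :: 277 :: 281 :: 283 :: 293 :: 307 :: 311 :: 313 :: 317 :: 331 :: 337 :: 347 :: 349 :: 353 :: 359 :: 367 :: 373 :: 379 :: 383 :: 389 :: 397 :: 401 ::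 409 :: 419 :: 421 :: 431 :: 433 :: 439 :: 443 :: 449 :: 457 :: 461 :: 463 :: 467 :: 479 :: 487 :: 491 :: 499 :: 503 :: 509 :: 521 :: 523 :: 541 :: 547 :: 557 :: 563 :: 569 :: 571 :: 577 :: 587 :: 593 :: 599 :: 601 :: 607 :: 613 :: 617 :: 619 :: 631 :: 641 :: 643 :: 647 :: 653 :: 659 :: 661 :: 673 :: 677 :: 683 :: 691 :: 701 :: 709 :: 719 :: 727 :: 733 :: 739 :: 743 :: 751 :: 757 :: 761 :: 769 :: 773 :: 787 :: 797 :: 809 :: 811 :: 821 :: 823 :: 827 :: 829 :: 839 :: 853 :: 857 :: 859 :: 863 :: 877 :: 881 :: 883 :: 887 :: 907 :: 911 :: 919 :: 929 :: 937 :: 941 :: 947 :: 953 :: 967 :: 971 :: 977 :: 983 :: 991 :: 997 :: 1009 :: 1013 :: 1019 :: 1021 :: 1031 :: 1033 :: 1039 :: 1049 :: 1051 :: 1061 :: 1063 :: 1069 :: 1087 :: 1091 :: 1093 :: 1097 :: 1103 :: 1109 :: 1117 :: 1123 :: 1129 :: 1151 :: 1153 :: 1163 :: 1171 :: 1181 :: 1187 :: 1193 :: 1201 :: 1213 :: 1217 :: 1223 :: 1229 :: 1231 :: 1237 :: 1249 :: 1259 :: 1277 :: 1279 :: 1283 :: 1289 :: 1291 :: 1297 :: 1301 :: 1303 :: 1307 :: 1319 :: 1321 :: 1327 :: 1361 :: 1367 :: 1373 :: 1381 :: 1399 :: 1409 :: 1423 :: 1427 :: 1429 :: 1433 :: 1439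 :: 1447 :: 1451 :: 1453 :: 1459 :: 1471 :: 1481 :: 1483 :: 1487 :: 1489 :: 1493 :: 1499 :: 1511 :: 1523 :: 1531 :: 1543 :: 1549 :: 1553 :: 1559 :: 1567 :: 1571 :: 1579 :: 1583 :: 1597 :: 1601 :: 1607 :: 1609 :: 1613 :: 1619 :: 1621 :: 1627 :: 1637 :: 1657 :: 1663 :: 1667 :: 1669 :: 1693 :: 1697 :: 1699 :: 1709 :: 1721 :: 1723 :: 1733 :: 1741 :: 1747 :: 1753 :: 1759 :: 1777 :: 1783 :: 1787 :: 1789 :: 1801 :: 1811 :: 1823 :: 1831 :: 1847 :: 1861 :: 1867 :: 1871 :: 1873 :: 1877 :: 1879 :: 1889 :: 1901 :: 1907 :: 1913 :: 1931 :: 1933 :: 1949 :: 1951 :: 1973 :: 1979 :: 1987 :: 1993 :: 1997 :: 1999 :: 2003 :: 2011 :: 2017 :: 2027 :: 2029 :: 2039 :: 2053 :: 2063 :: 2069 :: 2081 :: 2083 :: 2087 :: 2089 :: 2099 :: 2111 :: 2113 :: 2129 :: 2131 :: 2137 :: 2141 :: 2143 :: 2153 :: 2161 :: 2179 :: 2203 :: 2207 :: 2213 :: 2221 :: 2237 :: 2239 :: 2243 :: 2251 :: 2267 :: 2269 :: 2273 :: 2281 :: 2287 :: 2293 :: 2297 :: 2309 :: 2311 :: 2333 :: 2339 :: 2341 :: 2347 :: 2351 :: 2357 :: 2371 :: 2377 :: 2381 :: 2383 :: 2389 :: 2393 :: 2399 :: 2411 :: 2417 :: 2423 :: 2437 ::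 2441 :: 2447 :: 2459 :: 2467 :: 2473 :: 2477 :: 2503 :: 2521 :: 2531 :: 2539 :: 2543 :: 2549 :: 2551 :: 2557 :: 2579 :: 2591 :: 2593 :: 2609 :: 2617 :: 2621 :: 2633 :: 2647 :: 2657 :: 2659 :: 2663 :: 2671 :: 2677 :: 2683 :: 2687 :: 2689 :: 2693 :: 2699 :: 2707 :: 2711 :: 2713 :: 2719 :: 2729 :: 2731 :: 2741 :: 2749 :: 2753 :: 2767 :: 2777 :: 2789 :: 2791 :: 2797 :: 2801 :: 2803 :: 2819 :: 2833 :: 2837 :: 2843 :: 2851 :: 2857 :: 2861 :: 2879 :: 2887 :: 2897 :: 2903 :: 2909 :: 2917 :: 2927 :: 2939 :: 2953 :: 2957 :: 2963 :: 2969 :: 2971 :: 2999 :: 3001 :: 3011 :: 3019 :: 3023 :: 3037 :: 3041 :: 3049 :: 3061 :: 3067 :: 3079 :: 3083 :: 3089 :: 3109 :: 3119 :: 3121 :: 3137 :: 3163 :: 3167 :: 3169 :: 3181 :: 3187 :: 3191 :: 3203 :: 3209 :: 3217 :: 3221 :: 3229 :: 3251 :: 3253 :: 3257 :: 3259 :: 3271 :: 3299 :: 3301 :: 3307 :: 3313 :: 3319 :: 3323 :: 3329 :: 3331 :: 3343 :: 3347 :: 3359 :: 3361 :: 3371 :: 3373 :: 3389 :: 3391 :: 3407 :: 3413 :: 3433 :: 3449 :: 3457 :: 3461 :: 3463 :: 3467 :: 3469 :: 3491 :: 3499 :: 3511 :: 3517 :: 3527 :: 3529 :: 3533 :: 3539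 :: 3541 :: 3547 :: 3557 :: 3559 :: 3571 :: 3581 :: 3583 :: 3593 :: 3607 :: 3613 :: 3617 :: 3623 :: 3631 :: 3637 :: 3643 :: 3659 :: 3671 :: 3673 :: 3677 :: 3691 :: 3697 :: 3701 :: 3709 :: 3719 :: 3727 :: 3733 :: 3739 :: 3761 :: 3767 :: 3769 :: 3779 :: 3793 :: 3797 :: 3803 :: 3821 :: 3823 :: 3833 :: 3847 :: 3851 :: 3853 :: 3863 :: 3877 :: 3881 :: 3889 :: 3907 :: 3911 :: 3917 :: 3919 :: 3923 :: 3929 :: 3931 :: 3943 :: 3947 :: 3967 :: 3989 :: 4001 :: 4003 :: 4007 :: 4013 :: 4019 :: 4021 :: 4027 :: 4049 :: 4051 :: 4057 :: 4073 :: 4079 :: 4091 :: 4093 :: 4099 :: 4111 :: 4127 :: 4129 :: 4133 :: 4139 :: 4153 :: 4157 :: 4159 :: 4177 :: 4201 :: 4211 :: 4217 :: 4219 :: 4229 :: 4231 :: 4241 :: 4243 :: 4253 :: 4259 :: 4261 :: 4271 :: 4273 :: 4283 :: 4289 :: 4297 :: 4327 :: 4337 :: 4339 :: 4349 :: 4357 :: 4363 :: 4373 :: 4391 :: 4397 :: 4409 :: 4421 :: 4423 :: 4441 :: 4447 :: 4451 :: 4457 :: 4463 :: 4481 :: 4483 :: 4493 :: 4507 :: 4513 :: 4517 :: 4519 :: 4523 :: 4547 :: 4549 :: 4561 :: 4567 :: 4583 :: 4591 :: 4597 :: 4603 :: 4621 :: 4637 :: 4639 :: 4643 :: 4649 ::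 4651 :: 4657 :: 4663 :: 4673 :: 4679 :: 4691 :: 4703 :: 4721 :: 4723 :: 4729 :: 4733 :: 4751 :: 4759 :: 4783 :: 4787 :: 4789 :: 4793 :: 4799 :: 4801 :: 4813 :: 4817 :: 4831 :: 4861 :: 4871 :: 4877 :: 4889 :: 4903 :: 4909 :: 4919 :: 4931 :: 4933 :: 4937 :: 4943 :: 4951 :: 4957 :: 4967 :: 4969 :: 4973 :: 4987 :: 4993 :: 4999 :: 5003 :: 5009 :: 5011 :: 5021 :: 5023 :: 5039 :: 5051 :: 5059 :: 5077 :: 5081 :: 5087 :: 5099 :: 5101 :: 5107 :: 5113 :: 5119 :: 5147 :: 5153 :: 5167 :: 5171 :: 5179 :: 5189 :: 5197 :: 5209 :: 5227 :: 5231 :: 5233 :: 5237 :: 5261 :: 5273 :: 5279 :: 5281 :: 5297 :: 5303 :: 5309 :: 5323 :: 5333 :: 5347 :: 5351 :: 5381 :: 5387 :: 5393 :: 5399 :: 5407 :: 5413 :: 5417 :: 5419 :: 5431 :: 5437 :: 5441 :: 5443 :: 5449 :: 5471 :: 5477 :: 5479 :: 5483 :: 5501 :: 5503 :: 5507 :: 5519 :: 5521 :: 5527 :: 5531 :: 5557 :: 5563 :: 5569 :: 5573 :: 5581 :: 5591 :: 5623 :: 5639 :: 5641 :: 5647 :: 5651 :: 5653 :: 5657 :: 5659 :: 5669 :: 5683 :: 5689 :: 5693 :: 5701 :: 5711 :: 5717 :: 5737 :: 5741 :: 5743 :: 5749 :: 5779 :: 5783 :: 5791 :: 5801 :: 5807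 :: 5813 :: 5821 :: 5827 :: 5839 :: 5843 :: 5849 :: 5851 :: 5857 :: 5861 :: 5867 :: 5869 :: 5879 :: 5881 :: 5897 :: 5903 :: 5923 :: 5927 :: 5939 :: 5953 :: 5981 :: 5987 :: 6007 :: 6011 :: 6029 :: 6037 :: 6043 :: 6047 :: 6053 :: 6067 :: 6073 :: 6079 :: 6089 :: 6091 :: 6101 :: 6113 :: 6121 :: 6131 :: 6133 :: 6143 :: 6151 :: 6163 :: 6173 :: 6197 :: 6199 :: 6203 :: 6211 :: 6217 :: 6221 :: 6229 :: 6247 :: 6257 :: 6263 :: 6269 :: 6271 :: 6277 :: 6287 :: 6299 :: 6301 :: 6311 :: 6317 :: 6323 :: 6329 :: 6337 :: 6343 :: 6353 :: 6359 :: 6361 :: 6367 :: 6373 :: 6379 :: 6389 :: 6397 :: 6421 :: 6427 :: 6449 :: 6451 :: 6469 :: 6473 :: 6481 :: 6491 :: 6521 :: 6529 :: 6547 :: 6551 :: 6553 :: 6563 :: 6569 :: 6571 :: 6577 :: 6581 :: 6599 :: 6607 :: 6619 :: 6637 :: 6653 :: 6659 :: 6661 :: 6673 :: 6679 :: 6689 :: 6691 :: 6701 :: 6703 :: 6709 :: 6719 :: 6733 :: 6737 :: 6761 :: 6763 :: 6779 :: 6781 :: 6791 :: 6793 :: 6803 :: 6823 :: 6827 :: 6829 :: 6833 :: 6841 :: 6857 :: 6863 :: 6869 :: 6871 :: 6883 :: 6899 :: 6907 :: 6911 :: 6917 :: 6947 :: 6949 :: 6959 :: 6961 :: 6967 ::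 6971 :: 6977 :: 6983 :: 6991 :: 6997 :: 7001 :: 7013 :: 7019 :: 7027 :: 7039 :: 7043 :: 7057 :: 7069 :: 7079 :: 7103 :: 7109 :: 7121 :: 7127 :: 7129 :: 7151 :: 7159 :: 7177 :: 7187 :: 7193 :: 7207 :: 7211 :: 7213 :: 7219 :: 7229 :: 7237 :: 7243 :: 7247 :: 7253 :: 7283 :: 7297 :: 7307 :: 7309 :: 7321 :: 7331 :: 7333 :: 7349 :: 7351 :: 7369 :: 7393 :: 7411 :: 7417 :: 7433 :: 7451 :: 7457 :: 7459 :: 7477 :: 7481 :: 7487 :: 7489 :: 7499 :: 7507 :: 7517 :: 7523 :: 7529 :: 7537 :: 7541 :: 7547 :: 7549 :: 7559 :: 7561 :: 7573 :: 7577 :: 7583 :: 7589 :: 7591 :: 7603 :: 7607 :: 7621 :: 7639 :: 7643 :: 7649 :: 7669 :: 7673 :: 7681 :: 7687 :: 7691 :: 7699 :: 7703 :: 7717 :: 7723 :: 7727 :: 7741 :: 7753 :: 7757 :: 7759 :: 7789 :: 7793 :: 7817 :: 7823 :: 7829 :: 7841 :: 7853 :: 7867 :: 7873 :: 7877 :: 7879 :: 7883 :: 7901 :: 7907 :: 7919 :: 7927 :: 7933 :: 7937 :: 7949 :: 7951 :: 7963 :: 7993 :: 8009 :: 8011 :: 8017 :: 8039 :: 8053 :: 8059 :: 8069 :: 8081 :: 8087 :: 8089 :: 8093 :: 8101 :: 8111 :: 8117 :: 8123 :: 8147 :: 8161 :: 8167 :: 8171 :: 8179 :: 8191 :: 8209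 :: 8219 :: 8221 :: 8231 :: 8233 :: 8237 :: 8243 :: 8263 :: 8269 :: 8273 :: 8287 :: 8291 :: 8293 :: 8297 :: 8311 :: 8317 :: 8329 :: 8353 :: 8363 :: 8369 :: 8377 :: 8387 :: 8389 :: 8419 :: 8423 :: 8429 :: 8431 :: 8443 :: 8447 :: 8461 :: 8467 :: 8501 :: 8513 :: 8521 :: 8527 :: 8537 :: 8539 :: 8543 :: 8563 :: 8573 :: 8581 :: 8597 :: 8599 :: 8609 :: 8623 :: 8627 :: 8629 :: 8641 :: 8647 :: 8663 :: 8669 :: 8677 :: 8681 :: 8689 :: 8693 :: 8699 :: 8707 :: 8713 :: 8719 :: 8731 :: 8737 :: 8741 :: 8747 :: 8753 :: 8761 :: 8779 :: 8783 :: 8803 :: 8807 :: 8819 :: 8821 :: 8831 :: 8837 :: 8839 :: 8849 :: 8861 :: 8863 :: 8867 :: 8887 :: 8893 :: 8923 :: 8929 :: 8933 :: 8941 :: 8951 :: 8963 :: 8969 :: 8971 :: 8999 :: 9001 :: 9007 :: 9011 :: 9013 :: 9029 :: 9041 :: 9043 :: 9049 :: 9059 :: 9067 :: 9091 :: 9103 :: 9109 :: 9127 :: 9133 :: 9137 :: 9151 :: 9157 :: 9161 :: 9173 :: 9181 :: 9187 :: 9199 :: 9203 :: 9209 :: 9221 :: 9227 :: 9239 :: 9241 :: 9257 :: 9277 :: 9281 :: 9283 :: 9293 :: 9311 :: 9319 :: 9323 :: 9337 :: 9341 :: 9343 :: 9349 :: 9371 :: 9377 :: 9391 :: 9397 ::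 9403 :: 9413 :: 9419 :: 9421 :: 9431 :: 9433 :: 9437 :: 9439 :: 9461 :: 9463 :: 9467 :: 9473 :: 9479 :: 9491 :: 9497 :: 9511 :: 9521 :: 9533 :: 9539 :: 9547 :: 9551 :: 9587 :: 9601 :: 9613 :: 9619 :: 9623 :: 9629 :: 9631 :: 9643 :: 9649 :: 9661 :: 9677 :: 9679 :: 9689 :: 9697 :: 9719 :: 9721 :: 9733 :: 9739 :: 9743 :: 9749 :: 9767 :: 9769 :: 9781 :: 9787 :: 9791 :: 9803 :: 9811 :: 9817 :: 9829 :: 9833 :: 9839 :: 9851 :: 9857 :: 9859 :: 9871 :: 9883 :: 9887 :: 9901 :: 9907 :: 9923 :: 9929 :: 9931 :: 9941 :: 9949 :: 9967 :: 9973 :: 10007 :: 10009 :: 10037 :: 10039 :: 10061 :: 10067 :: 10069 :: 10079 :: 10091 :: 10093 :: 10099 :: 10103 :: 10111 :: 10133 :: 10139 :: 10141 :: 10151 :: 10159 :: 10163 :: 10169 :: 10177 :: 10181 :: 10193 :: 10211 :: 10223 :: 10243 :: 10247 :: 10253 :: 10259 :: 10267 :: 10271 :: 10273 :: 10289 :: 10301 :: 10303 :: 10313 :: 10321 :: 10331 :: 10333 :: 10337 :: 10343 :: 10357 :: 10369 :: 10391 :: 10399 :: 10427 :: 10429 :: 10433 :: 10453 :: 10457 :: 10459 :: 10463 :: 10477 :: 10487 :: 10499 :: 10501 :: 10513 :: 10529 :: 10531 :: 10559 :: 10567 :: 10589 :: 10597 :: 10601 :: 10607 :: 10613 :: 10627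 :: 10631 :: 10639 :: 10651 :: 10657 :: 10663 :: 10667 :: 10687 :: 10691 :: 10709 :: 10711 :: 10723 :: 10729 :: 10733 :: 10739 :: 10753 :: 10771 :: 10781 :: 10789 :: 10799 :: 10831 :: 10837 :: 10847 :: 10853 :: 10859 :: 10861 :: 10867 :: 10883 :: 10889 :: 10891 :: 10903 :: 10909 :: 10937 :: 10939 :: 10949 :: 10957 :: 10973 :: 10979 :: 10987 :: 10993 :: 11003 :: 11027 :: 11047 :: 11057 :: 11059 :: 11069 :: 11071 :: 11083 :: 11087 :: 11093 :: 11113 :: 11117 :: 11119 :: 11131 :: 11149 :: 11159 :: 11161 :: 11171 :: 11173 :: 11177 :: 11197 :: 11213 :: 11239 :: 11243 :: 11251 :: 11257 :: 11261 :: 11273 :: 11279 :: 11287 :: 11299 :: 11311 :: 11317 :: 11321 :: 11329 :: 11351 :: 11353 :: 11369 :: 11383 :: 11393 :: 11399 :: 11411 :: 11423 :: 11437 :: 11443 :: 11447 :: 11467 :: 11471 :: 11483 :: 11489 :: 11491 :: 11497 :: 11503 :: 11519 :: 11527 :: 11549 :: 11551 :: 11579 :: 11587 :: 11593 :: 11597 :: 11617 :: 11621 :: 11633 :: 11657 :: 11677 :: 11681 :: 11689 :: 11699 :: 11701 :: 11717 :: 11719 :: 11731 :: 11743 :: 11777 :: 11779 :: 11783 :: 11789 :: 11801 :: 11807 :: 11813 :: 11821 :: 11827 :: 11831 :: 11833 :: 11839 :: 11863 :: 11867 :: 11887 :: 11897 :: 11903 :: 11909 :: 11923 :: 11927 ::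 11933 :: 11939 :: 11941 :: 11953 :: 11959 :: 11969 :: 11971 :: 11981 :: 11987 :: 12007 :: 12011 :: 12037 :: 12041 :: 12043 :: 12049 :: 12071 :: 12073 :: 12097 :: 12101 :: 12107 :: 12109 :: 12113 :: 12119 :: 12143 :: 12149 :: 12157 :: 12161 :: 12163 :: 12197 :: 12203 :: 12211 :: 12227 :: 12239 :: 12241 :: 12251 :: 12253 :: 12263 :: 12269 :: 12277 :: 12281 :: 12289 :: 12301 :: 12323 :: 12329 :: 12343 :: 12347 :: 12373 :: 12377 :: 12379 :: 12391 :: 12401 :: 12409 :: 12413 :: 12421 :: 12433 :: 12437 :: 12451 :: 12457 :: 12473 :: 12479 :: 12487 :: 12491 :: 12497 :: 12503 :: 12511 :: 12517 :: 12527 :: 12539 :: 12541 :: 12547 :: 12553 :: 12569 :: 12577 :: 12583 :: 12589 :: 12601 :: 12611 :: 12613 :: 12619 :: 12637 :: 12641 :: 12647 :: 12653 :: 12659 :: 12671 :: 12689 :: 12697 :: 12703 :: 12713 :: 12721 :: 12739 :: 12743 :: 12757 :: 12763 :: 12781 :: 12791 :: 12799 :: 12809 :: 12821 :: 12823 :: 12829 :: 12841 :: 12853 :: 12889 :: 12893 :: 12899 :: 12907 :: 12911 :: 12917 :: 12919 :: 12923 :: 12941 :: 12953 :: 12959 :: 12967 :: 12973 :: 12979 :: 12983 :: 13001 :: 13003 :: 13007 :: 13009 :: 13033 :: 13037 :: 13043 :: 13049 :: 13063 :: 13093 :: 13099 :: 13103 :: 13109 :: 13121 :: 13127 :: 13147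 :: 13151 :: 13159 :: 13163 :: 13171 :: 13177 :: 13183 :: 13187 :: 13217 :: 13219 :: 13229 :: 13241 :: 13249 :: 13259 :: 13267 :: 13291 :: 13297 :: 13309 :: 13313 :: 13327 :: 13331 :: 13337 :: 13339 :: 13367 :: 13381 :: 13397 :: 13399 :: 13411 :: 13417 :: 13421 :: 13441 :: 13451 :: 13457 :: 13463 :: 13469 :: 13477 :: 13487 :: 13499 :: 13513 :: 13523 :: 13537 :: 13553 :: 13567 :: 13577 :: 13591 :: 13597 :: 13613 :: 13619 :: 13627 :: 13633 :: 13649 :: 13669 :: 13679 :: 13681 :: 13687 :: 13691 :: 13693 :: 13697 :: 13709 :: 13711 :: 13721 :: 13723 :: 13729 :: 13751 :: 13757 :: 13759 :: 13763 :: 13781 :: 13789 :: 13799 :: 13807 :: 13829 :: 13831 :: 13841 :: 13859 :: 13873 :: 13877 :: 13879 :: 13883 :: 13901 :: 13903 :: 13907 :: 13913 :: 13921 :: 13931 :: 13933 :: 13963 :: 13967 :: 13997 :: 13999 :: 14009 :: 14011 :: 14029 :: 14033 :: 14051 :: 14057 :: 14071 :: 14081 :: 14083 :: 14087 :: 14107 :: 14143 :: 14149 :: 14153 :: 14159 :: 14173 :: 14177 :: 14197 :: 14207 :: 14221 :: 14243 :: 14249 :: 14251 :: 14281 :: 14293 :: 14303 :: 14321 :: 14323 :: 14327 :: 14341 :: 14347 :: 14369 :: 14387 :: 14389 :: 14401 :: 14407 :: 14411 :: 14419 :: 14423 :: 14431 :: 14437 :: 14447 :: 14449 :: 14461 ::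 14479 :: 14489 :: 14503 :: 14519 :: 14533 :: 14537 :: 14543 :: 14549 :: 14551 :: 14557 :: 14561 :: 14563 :: 14591 :: 14593 :: 14621 :: 14627 :: 14629 :: 14633 :: 14639 :: 14653 :: 14657 :: 14669 :: 14683 :: 14699 :: 14713 :: 14717 :: 14723 :: 14731 :: 14737 :: 14741 :: 14747 :: 14753 :: 14759 :: 14767 :: 14771 :: 14779 :: 14783 :: 14797 :: 14813 :: 14821 :: 14827 :: 14831 :: 14843 :: 14851 :: 14867 :: 14869 :: 14879 :: 14887 :: 14891 :: 14897 :: 14923 :: 14929 :: 14939 :: 14947 :: 14951 :: 14957 :: 14969 :: 14983 :: 15013 :: 15017 :: 15031 :: 15053 :: 15061 :: 15073 :: 15077 :: 15083 :: 15091 :: 15101 :: 15107 :: 15121 :: 15131 :: 15137 :: 15139 :: 15149 :: 15161 :: 15173 :: 15187 :: 15193 :: 15199 :: 15217 :: 15227 :: 15233 :: 15241 :: 15259 :: 15263 :: 15269 :: 15271 :: 15277 :: 15287 :: 15289 :: 15299 :: 15307 :: 15313 :: 15319 :: 15329 :: 15331 :: 15349 :: 15359 :: 15361 :: 15373 :: 15377 :: 15383 :: 15391 :: 15401 :: 15413 :: 15427 :: 15439 :: 15443 :: 15451 :: 15461 :: 15467 :: 15473 :: 15493 :: 15497 :: 15511 :: 15527 :: 15541 :: 15551 :: 15559 :: 15569 :: 15581 :: 15583 :: 15601 :: 15607 :: 15619 :: 15629 :: 15641 :: 15643 :: 15647 :: 15649 :: 15661 :: 15667 :: 15671 :: 15679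 :: 15683 :: 15727 :: 15731 :: 15733 :: 15737 :: 15739 :: 15749 :: 15761 :: 15767 :: 15773 :: 15787 :: 15791 :: 15797 :: 15803 :: 15809 :: 15817 :: 15823 :: 15859 :: 15877 :: 15881 :: 15887 :: 15889 :: 15901 :: 15907 :: 15913 :: 15919 :: 15923 :: 15937 :: 15959 :: 15971 :: 15973 :: 15991 :: 16001 :: 16007 :: 16033 :: 16057 :: 16061 :: 16063 :: 16067 :: 16069 :: 16073 :: 16087 :: 16091 :: 16097 :: 16103 :: 16111 :: 16127 :: 16139 :: 16141 :: 16183 :: 16187 :: 16189 :: 16193 :: 16217 :: 16223 :: 16229 :: 16231 :: 16249 :: 16253 :: 16267 :: 16273 :: 16301 :: 16319 :: 16333 :: 16339 :: 16349 :: 16361 :: 16363 :: 16369 :: 16381 :: 16411 :: 16417 :: 16421 :: 16427 :: 16433 :: 16447 :: 16451 :: 16453 :: 16477 :: 16481 :: 16487 :: 16493 :: 16519 :: 16529 :: 16547 :: 16553 :: 16561 :: 16567 :: 16573 :: 16603 :: 16607 :: 16619 :: 16631 :: 16633 :: 16649 :: 16651 :: 16657 :: 16661 :: 16673 :: 16691 :: 16693 :: 16699 :: 16703 :: 16729 :: 16741 :: 16747 :: 16759 :: 16763 :: 16787 :: 16811 :: 16823 :: 16829 :: 16831 :: 16843 :: 16871 :: 16879 :: 16883 :: 16889 :: 16901 :: 16903 :: 16921 :: 16927 :: 16931 :: 16937 :: 16943 :: 16963 :: 16979 :: 16981 :: 16987 :: 16993 :: 17011 :: 17021 :: 17027 ::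 17029 :: 17033 :: 17041 :: 17047 :: 17053 :: 17077 :: 17093 :: 17099 :: 17107 :: 17117 :: 17123 :: 17137 :: 17159 :: 17167 :: 17183 :: 17189 :: 17191 :: 17203 :: 17207 :: 17209 :: 17231 :: 17239 :: 17257 :: 17291 :: 17293 :: 17299 :: 17317 :: 17321 :: 17327 :: 17333 :: 17341 :: 17351 :: 17359 :: 17377 :: 17383 :: 17387 :: 17389 :: 17393 :: 17401 :: 17417 :: 17419 :: 17431 :: 17443 :: 17449 :: 17467 :: 17471 :: 17477 :: 17483 :: 17489 :: 17491 :: 17497 :: 17509 :: 17519 :: 17539 :: 17551 :: 17569 :: 17573 :: 17579 :: 17581 :: 17597 :: 17599 :: 17609 :: 17623 :: 17627 :: 17657 :: 17659 :: 17669 :: 17681 :: 17683 :: 17707 :: 17713 :: 17729 :: 17737 :: 17747 :: 17749 :: 17761 :: 17783 :: 17789 :: 17791 :: 17807 :: 17827 :: 17837 :: 17839 :: 17851 :: nil.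
End PL.

Lemma chk_ok : chk plistN 0 1 = true.
Proof. vm_compute. reflexivity. Qed.

Lemma trial_sound q f : forall d, trial q d f = true -> N.le 1 d ->
  forall e, N.le d e -> N.le (N.mul e e) q -> N.modulo q e <> N0.
Proof.
  elim: f => [|f IH] d //= H Hd e Hde Hee.
  case E1: (N.ltb q (N.mul d d)) H => H.
  - move/N.ltb_lt: E1 => E1. nia.
  - case E2: (N.eqb (N.modulo q d) N0) H => H //.
    move/N.ltb_ge: E1 => E1. move/N.eqb_neq: E2 => E2.
    case: (N.eq_dec d e) => [<- //|Hne].
    apply: (IH (N.succ d)) => //; lia.
Qed.

Lemma isprimeN_sound q : isprimeN q = true -> prime (N.to_nat q).
Proof.
  rewrite /isprimeN => /andP [/N.leb_le H2 Ht].
  case Hp: (prime (N.to_nat q)) => //.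
  move/negbT/primePns: Hp => [Hlt|[p [Pp Hpp Hdv]]]; first lia.
  move/dvdnP: Hdv => [k Hk].
  have Hp2 := prime_gt1 Pp.
  have := trial_sound q 200 2 Ht ltac:(lia) (N.of_nat p) ltac:(lia).
  have Hq : q = N.mul (N.of_nat k) (N.of_nat p).
  { apply: N2Nat.inj. rewrite N2Nat.inj_mul !Nat2N.id. exact: Hk. }
  have Hpp' : (p * p <= N.to_nat q) by exact Hpp.
  move=> H.
  have G1 : N.le (N.mul (N.of_nat p) (N.of_nat p)) q by rewrite Hq; nia.
  have G2 : N.modulo q (N.of_nat p) = N0 by rewrite Hq; apply: N.Div0.mod_mul.
  exfalso. exact: (H G1 G2).
Qed.

Definition Inv (prev n0 : N) := forall q : nat, prime q -> N.to_nat prev < q ->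
  prime0 (N.to_nat n0).-1 <= q.

Lemma Inv_init : Inv N0 1%num.
Proof. move=> q Pq _. exact: prime_gt1 Pq. Qed.

Lemma Inv_step prev n0 x : Inv prev n0 -> N.lt prev x -> prime (N.to_nat x) -> N.le 1 n0 ->
  Inv x (N.succ n0) /\ prime0 (N.to_nat n0).-1 <= N.to_nat x.
Proof.
  move=> Hinv Hlt Px H1.
  have Hx : prime0 (N.to_nat n0).-1 <= N.to_nat x by apply: Hinv => //; lia.
  split => // q Pq Hq.
  rewrite N2Nat.inj_succ /=.
  have -> : N.to_nat n0 = (N.to_nat n0).-1.+1 by lia.
  rewrite /=. case: (next_prime_spec (prime0 (N.to_nat n0).-1)) => _ _ H.
  apply: H => //. lia.
Qed.

Lemma chk_cons x t prev n0 : chk (x :: t) prev n0 =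
  N.ltb prev x && isprimeN x &&
  (if N.leb 7 n0 && N.leb n0 2047 then N.leb (N.mul 3 x) (N.mul (N.mul 4 n0) (N.log2 n0)) else true) &&
  chk t x (N.succ n0).
Proof. reflexivity. Qed.

Lemma chk_sound l : forall prev n0, chk l prev n0 = true -> Inv prev n0 -> N.le 1 n0 ->
  forall n, N.to_nat n0 <= n -> 7 <= n <= 2047 ->
  exists j, (Nat.pow 2 j <= n) && (3 * prime0 n.-1 <= 4 * n * j).
Proof.
  elim: l => [|x t IH] prev n0.
  - move=> /N.leb_le H _ _ n Hn Hn2. exfalso. lia.
  - rewrite chk_cons. move=> /andP [/andP [/andP [/N.ltb_lt Hlt Hpx] Hb] Ht] Hinv H1 n Hn Hn2.
    have Px := isprimeN_sound _ Hpx.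
    have [Hinv' Hx] := Inv_step _ _ _ Hinv Hlt Px H1.
    case: (ltngtP (N.to_nat n0) n) => Hc.
    + apply: (IH x (N.succ n0)) => //; lia.
    + exfalso. lia.
    + have Hc1 : (N.leb 7 n0 && N.leb n0 2047) = true.
      { apply/andP; split; apply/N.leb_le; lia. }
      rewrite Hc1 in Hb. move/N.leb_le: Hb => Hb.
      exists (N.to_nat (N.log2 n0)).
      have [Hs1 _] := N.log2_spec n0 ltac:(lia).
      have Hs2 : Nat.pow 2 (N.to_nat (N.log2 n0)) <= N.to_nat n0.
      { rewrite -[2]/(N.to_nat 2) -N2Nat.inj_pow. apply/leP. lia. }
      rewrite -Hc. apply/andP; split => //.
      apply: leq_trans (_ : 3 * N.to_nat x <= _).
      * rewrite leq_mul2l /=. exact: Hx.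
      * have E1 : 4 * N.to_nat n0 * N.to_nat (N.log2 n0) = N.to_nat (N.mul (N.mul 4 n0) (N.log2 n0))
          by rewrite !N2Nat.inj_mul.
        have E2 : 3 * N.to_nat x = N.to_nat (N.mul 3 x) by rewrite N2Nat.inj_mul.
        rewrite E1 E2. apply/leP. lia.
Qed.

Lemma p_small' n : 7 <= n <= 2047 ->
  exists j, (Nat.pow 2 j <= n) && (3 * prime0 n.-1 <= 4 * n * j).
Proof.
  move=> Hn. apply: (chk_sound plistN N0 1%num chk_ok Inv_init) => //; rewrite /=; lia.
Qed.

Lemma sorted_filter_iota a b : sorted ltn (filter prime (iota a b)).
Proof. apply: sorted_filter; [exact: ltn_trans | exact: iota_ltn_sorted]. Qed.

Lemma all_prime_filter (s : seq nat) : all prime (filter prime s).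
Proof. apply/allP => q. by rewrite mem_filter => /andP []. Qed.

Open Scope R_scope.

Lemma ln_le x y : 0 < x -> x <= y -> ln x <= ln y.
Proof.
  intros H0 H1. destruct (Req_dec x y) as [->|Hne]; [lra|].
  left. apply ln_increasing; lra.
Qed.

Lemma ln_le_sub1 x : 0 < x -> ln x <= x - 1.
Proof.
  intros H. pose proof (exp_ineq1_le (ln x)). rewrite exp_ln in H0; lra.
Qed.

Lemma exp_sq a c : 0 <= c -> c <= exp a -> c * c <= exp (2 * a).
Proof.
  intros H0 H1. replace (2 * a) with (a + a) by ring. rewrite exp_plus.
  assert (0 < exp a) by apply exp_pos. nra.
Qed.

Lemma ln2_ge : 17/25 <= ln 2.
Proof.
  assert (H0 : 783/800 <= exp (-(17/800))).
  { pose proof (exp_ineq1_le (-(17/800))). lra. }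
  assert (H1 := exp_sq _ (783/800) ltac:(lra) H0).
  assert (H1' : 9579/10000 <= exp (2 * -(17/800))) by lra.
  assert (H2 := exp_sq _ (9579/10000) ltac:(lra) H1').
  assert (H2' : 367/400 <= exp (2 * (2 * -(17/800)))) by lra.
  assert (H3 := exp_sq _ (367/400) ltac:(lra) H2').
  assert (H3' : 4209/5000 <= exp (2 * (2 * (2 * -(17/800))))) by lra.
  assert (H4 := exp_sq _ (4209/5000) ltac:(lra) H3').
  assert (H4' : 3543/5000 <= exp (2 * (2 * (2 * (2 * -(17/800)))))) by lra.
  assert (H5 := exp_sq _ (3543/5000) ltac:(lra) H4').
  replace (2 * (2 * (2 * (2 * (2 * -(17/800)))))) with (- (17/25)) in H5 by field.
  assert (H6 : exp (17/25) * exp (-(17/25)) = 1).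
  { rewrite <- exp_plus. replace (17/25 + -(17/25)) with 0 by ring. apply exp_0. }
  assert (H7 : exp (17/25) <= 2).
  { assert (0 < exp (17/25)) by apply exp_pos. nra. }
  rewrite <- (ln_exp (17/25)). apply ln_le; [apply exp_pos | exact H7].
Qed.

Lemma ln3_ge : 1 <= ln 3.
Proof.
  rewrite <- ln_exp at 1. apply ln_le; [apply exp_pos | apply exp_le_3].
Qed.

Lemma INR_leq (a b : nat) : (a <= b)%N -> INR a <= INR b.
Proof. move/leP. apply: le_INR. Qed.
Lemma INR_ltn (a b : nat) : (a < b)%N -> INR a < INR b.
Proof. move/ltP. apply: lt_INR. Qed.
Lemma INR_muln a b : INR (a * b)%N = INR a * INR b.
Proof. rewrite mulnE. apply: mult_INR. Qed.
Lemma INR_addn a b : INR (a + b)%N = INR a + INR b.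
Proof. rewrite addnE. apply: plus_INR. Qed.
Lemma INR_expn a n : INR (a ^ n)%N = INR a ^ n.
Proof. elim: n => [|n IH]; first by rewrite expn0. by rewrite expnS INR_muln IH. Qed.
Lemma INR_double a : INR (a.*2)%N = 2 * INR a.
Proof. rewrite -muln2 INR_muln /=. lra. Qed.

Lemma ln2_le1 : ln 2 <= 1.
Proof. have := ln_le_sub1 2. lra. Qed.
Lemma ln2_pos : 0 < ln 2.
Proof. have := ln2_ge. lra. Qed.

Lemma pn_small n : (7 <= n <= 2047)%N -> INR (prime0 n.-1) <= 2 * INR n * ln (INR n).
Proof.
  move=> Hn. have [j /andP [Hj H]] := p_small' n Hn.
  have HR := INR_leq _ _ H. rewrite !INR_muln in HR.
  have HjR := INR_leq _ _ Hj. rewrite pow_INR in HjR.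
  have Hl : INR j * ln 2 <= ln (INR n).
  { replace (INR 2) with 2 in HjR by (simpl; lra).
    rewrite -ln_pow; last lra. apply: ln_le; last exact HjR. apply: pow_lt. lra. }
  have Hn7 : 7 <= INR n by (have := INR_leq 7 n ltac:(lia)); simpl; lra.
  have Hj0 : 0 <= INR j by apply: pos_INR.
  have := ln2_ge. replace (INR 3) with 3 in HR by (simpl; lra).
  replace (INR 4) with 4 in HR by (simpl; lra). move=> Hl2.
  have : INR n * INR j * (2/3) <= INR n * INR j * ln 2.
  { apply: Rmult_le_compat_l; [nra | lra]. }
  have : INR n * (INR j * ln 2) <= INR n * ln (INR n).
  { apply: Rmult_le_compat_l; lra. }
  nra.
Qed.

Lemma nat_floor r : 0 <= r -> exists m : nat, r - 1 < INR m <= r.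
Proof.
  move=> Hr. destruct (archimed r) as [H1 H2].
  have Hup : (0 <= up r - 1)%Z.
  { have : (0 < up r)%Z by apply: lt_IZR; lra. lia. }
  exists (Z.to_nat (up r - 1)). rewrite INR_IZR_INZ Z2Nat.id // minus_IZR /=. lra.
Qed.

Lemma ln_mult3 a b c : 0 < a -> 0 < b -> 0 < c -> ln (a * b * c) = ln a + ln b + ln c.
Proof. move=> Ha Hb Hc. rewrite ln_mult; [|nra|lra]. rewrite ln_mult //. Qed.

Lemma lnL_bound L : 0 < L -> ln L <= 3 * ln 2 - 1 + L / 8.
Proof.
  move=> HL. have -> : L = 8 * (L / 8) by lra.
  rewrite ln_mult; [|lra|lra].
  have E : ln 8 = 3 * ln 2.
  { have -> : 8 = 2 ^ 3 by (simpl; lra). rewrite ln_pow; last lra. simpl. lra. }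
  have := ln_le_sub1 (L / 8). lra.
Qed.

Lemma pn_large n : (2048 <= n)%N -> INR (prime0 n.-1) <= 2 * INR n * ln (INR n).
Proof.
  move=> Hn.
  set N := INR n. set L := ln N.
  have HN : 2048 <= N by have := INR_leq 2048 n Hn; rewrite /N; simpl; lra.
  have Hl2 := ln2_ge. have Hl2' := ln2_le1.
  have HL : 11 * ln 2 <= L.
  { have -> : 11 * ln 2 = ln (2 ^ 11) by rewrite ln_pow; [simpl; lra | lra].
    apply: ln_le; simpl; lra. }
  have HNL : 1 <= N * L by nra.
  have [m [Hm1 Hm2]] := nat_floor (N * L) ltac:(lra).
  set mR := INR m in Hm1 Hm2.
  have Hm0 : (0 < m)%N.
  { case: (posnP m) => // Hm. rewrite /mR Hm /= in Hm1. nra. }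
  set pi := count prime (iota 0 (m.*2).+1).
  have Hnat : (4 ^ m <= (m.*2).+1 * (m.*2) ^ pi)%N.
  { apply: leq_trans (bin_lower m) _. rewrite leq_mul2l. apply/orP; right.
    exact: bin_le_pow. }
  have HR := INR_leq _ _ Hnat.
  rewrite INR_muln !INR_expn in HR. replace (INR 4) with 4 in HR by (simpl; lra).
  rewrite S_INR INR_double in HR. fold mR in HR.
  set PI := INR pi in HR.
  have Hpi : (n <= pi)%N.
  { case: (leqP n pi) => // Hlt. exfalso.
    have HPI : PI <= N - 1.
    { have := INR_leq _ _ (Hlt : (pi.+1 <= n)%N). rewrite S_INR /PI /N. lra. }
    have HPI0 : 0 <= PI by apply: pos_INR.
    have HmR1 : 1 <= mR by have := INR_leq 1 m Hm0; rewrite /mR /=; lra.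
    have H2m : 1 <= 2 * mR by lra.
    have Hln := ln_le _ _ (pow_lt 4 m ltac:(lra)) HR.
    rewrite ln_pow in Hln; last lra.
    rewrite ln_mult in Hln; [|lra| apply: pow_lt; lra].
    rewrite ln_pow in Hln; last lra.
    have E4' : ln 4 = 2 * ln 2.
    { have -> : 4 = 2 * 2 by lra. rewrite ln_mult; lra. }
    rewrite E4' in Hln.
    fold mR PI in Hln.
    have Hl2m0 : 0 <= ln (2 * mR) by rewrite -ln_1; apply: ln_le; lra.
    have Hlnpos : 0 < L.
    { have := ln2_pos. lra. }
    have HlnL := lnL_bound L Hlnpos.
    have Hl2m : ln (2 * mR) <= ln 2 + L + ln L.
    { rewrite -ln_mult3; [|lra|lra|lra]. apply: ln_le; lra. }
    have Hl2m1 : ln (2 * mR + 1) <= ln 3 + L + ln L.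
    { rewrite -ln_mult3; [|lra|lra|lra]. apply: ln_le; lra. }
    have Hln3 : ln 3 <= 2 by have := ln_le_sub1 3; lra.
    have E1 : PI * ln (2 * mR) <= (N - 1) * ln (2 * mR) by apply: Rmult_le_compat_r.
    have E2 : (N - 1) * ln (2 * mR) <= (N - 1) * (ln 2 + L + ln L) by apply: Rmult_le_compat_l; lra.
    have E3 : (2 * ln 2) * (N * L - 1) < (2 * ln 2) * mR by apply: Rmult_lt_compat_l; lra.
    have E4 : N * ln L <= N * (3 * ln 2 - 1 + L / 8) by apply: Rmult_le_compat_l; lra.
    have E5 : (2 * ln 2 - 9/8) * (11 * ln 2) <= (2 * ln 2 - 9/8) * L by apply: Rmult_le_compat_l; lra.
    have E6 : 3/100 <= (2 * ln 2 - 9/8) * L - 4 * ln 2 + 1 by nra.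
    have E7 : N * (3/100) <= N * ((2 * ln 2 - 9/8) * L - 4 * ln 2 + 1) by apply: Rmult_le_compat_l; lra.
    nra. }
  set s := filter prime (iota 0 (m.*2).+1).
  have Hsz : (n.-1 < size s)%N by rewrite size_filter; lia.
  have H1 := prime0_le_nth s (sorted_filter_iota _ _) (all_prime_filter _) _ Hsz.
  have H2 : (nth 0 s n.-1 <= m.*2)%N.
  { have := mem_nth 0%N Hsz. rewrite mem_filter mem_iota => /andP [_ /andP [_ H]]. by rewrite add0n ltnS in H. }
  have := INR_leq _ _ (leq_trans H1 H2). rewrite INR_double. fold mR. lra.
Qed.

Lemma pn_bound n : (7 <= n)%N -> INR (prime0 n.-1) <= 2 * INR n * ln (INR n).
Proof.
  move=> Hn. case: (leqP n 2047) => H.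
  - apply: pn_small. by rewrite Hn H.
  - exact: pn_large.
Qed.

Lemma psum_le k N Q : (forall i, (i < N)%N -> INR (prime0 i) <= Q) ->
  psum k N <= INR N * Q ^ k.
Proof.
  elim: N => [|N IH] H; first by (simpl; lra).
  change (psum k N.+1) with (psum k N + INR (prime0 N) ^ k). rewrite S_INR.
  have H1 : psum k N <= INR N * Q ^ k.
  { apply: IH => i Hi. apply: H. lia. }
  have H2 : INR (prime0 N) ^ k <= Q ^ k.
  { apply: pow_incr. split; [apply: pos_INR | apply: H; lia]. }
  lra.
Qed.

Lemma pow_diff a b n : 0 <= b <= a ->
  a ^ (S n) - b ^ (S n) <= INR (S n) * a ^ n * (a - b).
Proof.
  move=> [Hb Ha]. elim: n => [|n IH]; first by (simpl; lra).
  have E : a ^ (S (S n)) - b ^ (S (S n)) = a * (a ^ (S n) - b ^ (S n)) + b ^ (S n) * (a - b)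
    by simpl; ring.
  rewrite E.
  have H1 : a * (a ^ (S n) - b ^ (S n)) <= a * (INR (S n) * a ^ n * (a - b))
    by apply: Rmult_le_compat_l; lra.
  have H2 : b ^ (S n) * (a - b) <= a ^ (S n) * (a - b).
  { apply: Rmult_le_compat_r; first lra. apply: pow_incr. lra. }
  have E2 : INR (S (S n)) * a ^ (S n) * (a - b) = a * (INR (S n) * a ^ n * (a - b)) + a ^ (S n) * (a - b).
  { rewrite (S_INR (S n)) /=. ring. }
  rewrite E2. lra.
Qed.

Lemma psum_ge k M : INR M ^ (S k) <= INR (S k) * psum k M.
Proof.
  elim: M => [|M IH]; first by (simpl; lra).
  change (psum k M.+1) with (psum k M + INR (prime0 M) ^ k).
  have Hp : INR M + 1 <= INR (prime0 M).
  { have := INR_leq _ _ (prime0_ge M). rewrite !S_INR. lra. }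
  have HM := pos_INR M.
  have H1 := pow_diff (INR (S M)) (INR M) k ltac:(rewrite S_INR; lra).
  rewrite S_INR in H1. rewrite S_INR.
  have H2 : (INR M + 1) ^ k <= INR (prime0 M) ^ k by apply: pow_incr; lra.
  have Hk := pos_INR (S k).
  have H3 : INR (S k) * (INR M + 1) ^ k <= INR (S k) * INR (prime0 M) ^ k
    by apply: Rmult_le_compat_l.
  replace (INR M + 1 - INR M) with 1 in H1 by ring.
  nra.
Qed.

Lemma ln_div' a b : 0 < a -> 0 < b -> ln (a / b) = ln a - ln b.
Proof.
  move=> Ha Hb. have Hb' : 0 < / b by apply: Rinv_0_lt_compat.
  rewrite /Rdiv ln_mult // ln_Rinv //.
Qed.

Lemma ln7_ge : 3 / 2 <= ln 7.
Proof.
  have H1 : ln (7 ^ 2) = 2 * ln 7 by rewrite ln_pow; [simpl; lra | lra].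
  have H2 : ln (3 ^ 3) = 3 * ln 3 by rewrite ln_pow; [simpl; lra | lra].
  have H3 : ln (3 ^ 3) <= ln (7 ^ 2) by apply: ln_le; simpl; lra.
  have := ln3_ge. lra.
Qed.

Lemma upper_part k x M0 M : (2 <= k)%N -> 0 < x -> (6 <= M0)%N ->
  psum k M <= x -> (M0 <= M)%N ->
  ln (INR M) < ln x / (INR k + 1) * / A (INR M0).
Proof.
  move=> Hk Hx HM0 Hx1 HM.
  have HM0R : 6 <= INR M0 by have := INR_leq 6 M0 HM0; simpl; lra.
  have HMR : INR M0 <= INR M by apply: INR_leq.
  set u := ln (INR M0). set v := ln (INR M). set l2 := ln 2.
  have Hl2 : 17/25 <= l2 := ln2_ge.
  have Hu : 1 <= u.
  { have := ln3_ge. have : ln 3 <= u by apply: ln_le; lra. lra. }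
  have Hv : u <= v by apply: ln_le; lra.
  have E0 : ln (INR M0 / 2) = u - l2 by apply: ln_div'; lra.
  have E1 : ln (INR M / 2) = v - l2 by apply: ln_div'; lra.
  have HA0 : 1 <= ln (INR M0 / 2).
  { have := ln3_ge. have : ln 3 <= ln (INR M0 / 2) by apply: ln_le; lra. lra. }
  have EA : A (INR M0) = (u - l2) / u by rewrite /A E0.
  have HA : 0 < A (INR M0) by rewrite EA; apply: Rdiv_lt_0_compat; lra.
  have HAv : A (INR M0) * v <= v - l2.
  { rewrite EA. apply: (Rmult_le_reg_r u); first lra.
    have -> : (u - l2) / u * v * u = (u - l2) * v by field; lra. nra. }
  have Hpx := psum_ge k M.
  have HK := INR_ltn _ _ (ltn_expl k.+1 (isT : (1 < 2)%N)).
  rewrite INR_expn in HK. replace (INR 2) with 2 in HK by (simpl; lra).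
  have HKpos : 0 < INR k.+1 by apply: lt_0_INR; apply/ltP.
  have HMpos : 0 < INR M by lra.
  have HY : 0 < INR M ^ k.+1 by apply: pow_lt.
  have Hxb : (INR M / 2) ^ k.+1 < x.
  { rewrite /Rdiv Rpow_mult_distr pow_inv.
    have H1 : INR M ^ k.+1 * / 2 ^ k.+1 < INR M ^ k.+1 * / INR k.+1.
    { apply: Rmult_lt_compat_l => //. apply: Rinv_lt_contravar => //. nra. }
    have H2 : INR M ^ k.+1 * / INR k.+1 <= x.
    { apply: (Rmult_le_reg_r (INR k.+1)) => //.
      have -> : INR M ^ k.+1 * / INR k.+1 * INR k.+1 = INR M ^ k.+1 by field; lra. nra. }
    lra. }
  have Hlx : INR k.+1 * (v - l2) < ln x.
  { rewrite -E1 -ln_pow; last lra. apply: ln_increasing => //. apply: pow_lt; lra. }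
  rewrite S_INR in Hlx.
  have HK0 : 0 < INR k + 1 by have := pos_INR k; lra.
  apply: (Rmult_lt_reg_r ((INR k + 1) * A (INR M0))); first nra.
  have -> : ln x / (INR k + 1) * / A (INR M0) * ((INR k + 1) * A (INR M0)) = ln x
    by field; lra.
  have : (INR k + 1) * (A (INR M0) * v) <= (INR k + 1) * (v - l2)
    by apply: Rmult_le_compat_l; lra.
  nra.
Qed.

Lemma lower_part k x M0 M : (2 <= k)%N -> 0 < x -> (6 <= M0)%N ->
  x < psum k M + INR (p (S M)) ^ k -> (M0 <= M)%N ->
  ln (INR M) >= ln x / (INR k + 1) * / B (INR M0) k.
Proof.
  move=> Hk Hx HM0 Hx2 HM.
  have HM0R : 6 <= INR M0 by have := INR_leq 6 M0 HM0; simpl; lra.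
  have HMR : INR M0 <= INR M by apply: INR_leq.
  set u := ln (INR M0). set v := ln (INR M). set l2 := ln 2.
  have Hl2 : 17/25 <= l2 := ln2_ge.
  have Hu : 1 <= u.
  { have := ln3_ge. have : ln 3 <= u by apply: ln_le; lra. lra. }
  have Hv : u <= v by apply: ln_le; lra.
  set nR := INR M + 1. set Lf := ln nR.
  set L0 := ln (INR M0 + 1).
  have HL0 : 3/2 <= L0.
  { have := ln7_ge. have : ln 7 <= L0 by apply: ln_le; lra. lra. }
  have HLf0 : L0 <= Lf by apply: ln_le; rewrite /nR; lra.
  have HuL0 : u <= L0 by apply: ln_le; lra.
  have HvLf : v <= Lf by apply: ln_le; rewrite /nR; lra.
  have G1 : Lf + u <= L0 + v.
  { have E1 : ln (nR * INR M0) = Lf + u.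
    { rewrite ln_mult; [reflexivity | rewrite /nR; lra | lra]. }
    have E2 : ln ((INR M0 + 1) * INR M) = L0 + v.
    { rewrite ln_mult; [reflexivity | lra | lra]. }
    rewrite -E1 -E2. apply: ln_le; rewrite /nR; nra. }
  have Hpn := pn_bound M.+1 ltac:(lia).
  change (M.+1.-1) with M in Hpn. rewrite S_INR -/nR -/Lf in Hpn.
  set Q := 2 * nR * Lf in Hpn.
  have HLfpos : 0 < Lf by lra.
  have HQ : 0 < Q by rewrite /Q /nR; nra.
  have Hps : psum k M.+1 <= INR M.+1 * Q ^ k.
  { apply: psum_le => i Hi. apply: Rle_trans Hpn.
    apply: INR_leq. apply: prime0_mono. lia. }
  rewrite S_INR -/nR in Hps.
  have Hx3 : x < nR * Q ^ k by (change (psum k M.+1) with (psum k M + INR (p M.+1) ^ k) in Hps); lra.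
  have Hlx : ln x < Lf + INR k * (l2 + Lf + ln Lf).
  { have HQk : 0 < Q ^ k by apply: pow_lt.
    have := ln_increasing _ _ Hx Hx3. rewrite ln_mult; [|rewrite /nR; lra|done].
    rewrite ln_pow // /Q ln_mult3 //; rewrite /nR; lra. }
  set c0 := ln (ln ((INR M0 + 1) ^ 2)).
  have Ec0 : c0 = l2 + ln L0.
  { rewrite /c0 ln_pow; last lra. replace (INR 2) with 2 by (simpl; lra).
    rewrite -/L0 ln_mult; [reflexivity | lra | lra]. }
  have Hc0 : 1 <= c0.
  { have := ln3_ge. have : ln 3 <= ln (2 * L0) by apply: ln_le; lra.
    have : ln (2 * L0) = c0.
    { rewrite /c0 ln_pow; last lra. replace (INR 2) with 2 by (simpl; lra). reflexivity. }
    lra. }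
  have EB : (INR k + 1) * B (INR M0) k = (INR k + 1) * (L0 / u) + INR k * (c0 / u).
  { rewrite /B -/L0 -/c0 -/u. field. have := pos_INR k. lra. }
  have F1 : Lf <= L0 / u * v.
  { apply: (Rmult_le_reg_r u); first lra.
    have -> : L0 / u * v * u = L0 * v by field; lra.
    nra. }
  have F2 : l2 + ln Lf <= c0 / u * v.
  { apply: (Rmult_le_reg_r u); first lra.
    have -> : c0 / u * v * u = c0 * v by field; lra.
    have Hln : ln Lf - ln L0 <= Lf / L0 - 1.
    { rewrite -ln_div'; try lra. apply: ln_le_sub1. apply: Rdiv_lt_0_compat; lra. }
    have H1 : 0 <= Lf / L0 - 1.
    { have : 1 <= Lf / L0 by apply: (Rmult_le_reg_r L0); [lra | field_simplify; lra].
      lra. }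
    have H2 : u * (Lf / L0 - 1) <= L0 * (Lf / L0 - 1) by apply: Rmult_le_compat_r.
    have E3 : L0 * (Lf / L0 - 1) = Lf - L0 by field; lra.
    have H4 : u * (ln Lf - ln L0) <= u * (Lf / L0 - 1) by apply: Rmult_le_compat_l; lra.
    rewrite Ec0 in Hc0 |- *. nra. }
  have HK0 := pos_INR k.
  have HB : 0 < (INR k + 1) * B (INR M0) k.
  { rewrite EB. have : 0 < L0 / u by apply: Rdiv_lt_0_compat; lra.
    have : 0 <= c0 / u by apply: Rle_mult_inv_pos; lra. nra. }
  apply: Rle_ge. apply: (Rmult_le_reg_r ((INR k + 1) * B (INR M0) k)) => //.
  have -> : ln x / (INR k + 1) * / B (INR M0) k * ((INR k + 1) * B (INR M0) k) = ln x.
  { field. split; [|lra]. move=> HB0. rewrite HB0 in HB. lra. }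
  rewrite EB.
  have T1 : (INR k + 1) * Lf <= (INR k + 1) * (L0 / u * v) by apply: Rmult_le_compat_l; lra.
  have T2 : INR k * (l2 + ln Lf) <= INR k * (c0 / u * v) by apply: Rmult_le_compat_l; lra.
  nra.
Qed.

Import Corelib.Init.Peano.
Open Scope R_scope.

Theorem lemma2p5 (k : nat) (x : R) (M0 M : nat) :
  (2 <= k)%nat -> 0 < x -> (6 <= M0)%nat ->
  psum k M <= x < psum k M + INR (p (S M)) ^ k ->
  (M0 <= M)%nat ->
  ln (INR M) < ln x / (INR k + 1) * / A (INR M0) /\
  ln (INR M) >= ln x / (INR k + 1) * / B (INR M0) k.
Proof.
  intros Hk Hx HM0 [Hx1 Hx2] HM.
  move/leP: Hk => Hk. move/leP: HM0 => HM0. move/leP: HM => HM.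
  split.
  - exact: (upper_part k x M0 M Hk Hx HM0 Hx1 HM).
  - exact: (lower_part k x M0 M Hk Hx HM0 Hx2 HM).
Qed.
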